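(* Fix $t\ge 0$ and let $\sigma\subseteq\mathcal C$ and $\tau\subseteq\mathcal Y^\circ$ be finite, nonempty subsets. Set $A:=\max_{x\in\sigma} r_{\mathcal C}(x)$, $B:=\max_{y\in\tau} r_{\mathcal Y}(y)$. Then $\sigma\cup\tau$ is a simplex of $\mathrm{VR}_t(\mathcal X,d_\theta)$ if and only if: (1) $\sigma$ is a simplex of $\mathrm{VR}_t(\mathcal C,\beta)$; (2) $\tau$ is a simplex of $\mathrm{VR}_t(\mathcal Y^\circ,d_{\mathrm{reg}})$; (3) $\|(A,B)\|_{\ell^p}\le t$.
   Context: Let $A$ be a unital $C^*$-algebra, $H$ a Hilbert space, $\mathcal X=\mathrm{CB}(A,B(H))$, $\mathcal C=\mathrm{CP}(A,B(H))$ with Bures distance $\beta$. Fix $\theta\in\mathcal C$, $\lambda>0$, $\alpha\in(0,1]$, $p\in[1,\infty]$ and let $d_\theta$ be the Bures--Kuratowski metric $\beta^{BK}_{\theta,\lambda,p,\alpha}$ on $\mathcal X$. Let $\mathcal Y=(\mathcal X\setminus\mathcal C)\sqcup\{\ast\}$ with metric $d_{\mathrm{reg}}(x,y)=\lambda\delta_{\mathrm{reg}}(x,y)^\alpha$, $d_{\mathrm{reg}}(x,\ast)=\lambda\delta_{\mathrm{reg}}(x,0)^\alpha$, where $\delta_{\mathrm{reg}}$ is the regular-representation metric, and $\mathcal Y^\circ=\mathcal Y\setminus\{\ast\}\cong\mathcal X\setminus\mathcal C$. Then $d_\theta=\beta$ on $\mathcal C$, $d_\theta=d_{\mathrm{reg}}$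 on $\mathcal Y^\circ$, and $d_\theta(x,y)=\|(r_{\mathcal C}(x),r_{\mathcal Y}(y))\|_{\ell^p}$ for $x\in\mathcal C$, $y\in\mathcal Y$, where $r_{\mathcal C}(x)=\beta(x,\theta)$ and $r_{\mathcal Y}(y)=d_{\mathrm{reg}}(y,\ast)$. For a metric space $(Z,d)$, $\mathrm{VR}_t(Z,d)$ is the simplicial complex on $Z$ whose simplices are finite subsets of diameter $\le t$. *)

(* Defs.v *)
From HB Require Import structures.
From mathcomp Require Import all_boot all_order all_algebra.
From mathcomp Require Import all_classical all_reals all_analysis.
Set Implicit Arguments. Unset Strict Implicit. Unset Printing Implicit Defensive.
Import Order.TTheory GRing.Theory Num.Theory.
Local Open Scope classical_set_scope.
Local Open Scope ring_scope.

Definition lpnorm2 (R : realType) (p : \bar R) (a b : R) : R :=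
  match p with
  | +oo%E => Num.max `|a| `|b|
  | (r%:E)%E => powR (powR `|a| r + powR `|b| r) r^-1
  | -oo%E => 0
  end.

Definition VR_simplex (R : realType) (X : Type) (Z : set X) (d : X -> X -> R)
  (t : R) (s : set X) : Prop :=
  [/\ s `<=` Z, finite_set s, s !=set0 &
      forall x y, s x -> s y -> d x y <= t].

(* Main.v *)
Require Import Defs.
From HB Require Import structures.
From mathcomp Require Import all_boot all_order all_algebra.
From mathcomp Require Import all_classical all_reals all_analysis.
Import Order.TTheory GRing.Theory Num.Theory.
Local Open Scope classical_set_scope.
Local Open Scope ring_scope.

Lemma lp_mono (R : realType) (p : \bar R) (a b a' b' : R) : (1 <= p)%E ->
  0 <= a -> a <= a' -> 0 <= b -> b <= b' -> lpnorm2 p a b <= lpnorm2 p a' b'.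
Proof.
move=> p1 a0 aa b0 bb.
have a'0 : 0 <= a' by apply: le_trans aa.
have b'0 : 0 <= b' by apply: le_trans bb.
case: p p1 => [r||] //= p1.
- rewrite lee_fin in p1.
  have r0 : 0 < r by apply: lt_le_trans p1.
  apply: ge0_ler_powR; first by rewrite invr_ge0 ltW.
  + by rewrite nnegrE addr_ge0 // powR_ge0.
  + by rewrite nnegrE addr_ge0 // powR_ge0.
  + rewrite !ger0_norm //; apply: lerD; apply: ge0_ler_powR => //; try exact: ltW;
    by rewrite nnegrE.
- rewrite !ger0_norm // ge_max !le_max aa bb orbT //.
Qed.

Lemma fin_sup (R : realType) (S : set R) : finite_set S -> S !=set0 ->
  S (sup S) /\ (forall y, S y -> y <= sup S).
Proof.
move=> /finite_seqP [s ->] [x0 Hx0].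
have [m [ms mub]] : exists m, m \in s /\ forall y, y \in s -> y <= m.
  move: x0 Hx0; rewrite /=; elim: s => [|a s IH] //= x0 Has.
  have [->|sn] := eqVneq s [::].
    exists a; split; first by rewrite mem_seq1.
    by move=> y; rewrite mem_seq1 => /eqP ->.
  have [z zs] : exists z, z \in s by clear IH Has; case: s sn => // z s _; exists z; rewrite mem_head.
  have [m [ms mub]] := IH z zs.
  exists (Num.max a m); split.
    by rewrite /Num.max; case: ifP => _; rewrite in_cons ?eqxx ?ms ?orbT.
  move=> y; rewrite in_cons => /orP [/eqP ->|ys]; rewrite le_max ?lexx //.
  by rewrite mub ?orbT.
have ub : ubound [set` s] m by move=> y /= ys; exact: mub.
have -> : sup [set` s] = m.
  apply/eqP; rewrite eq_le; apply/andP; split.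
    by apply: ge_sup => //; exists x0.
  by apply: ub_le_sup => //; exists m.
by split => //.
Qed.

Theorem proposition6p3 (R : realType) (X : Type)
  (C : set X)                      (* the cone CP(A,B(H)) inside X = CB(A,B(H)) *)
  (d beta dreg : X -> X -> R)      (* d_theta, Bures distance, d_reg on Y° = X \ C *)
  (rY : X -> R)                    (* r_Y(y) = d_reg(y, * ) *)
  (theta : X) (p : \bar R) (t : R)
  (sigma tau : set X) :
  C theta -> (1 <= p)%E ->
  (forall x y, d x y = d y x) ->
  (forall x y, 0 <= beta x y) -> (forall y, 0 <= rY y) ->
  (forall x y, C x -> C y -> d x y = beta x y) ->
  (forall x y, ~ C x -> ~ C y -> d x y = dreg x y) ->
  (forall x y, C x -> ~ C y -> d x y = lpnorm2 p (beta x theta) (rY y)) ->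
  0 <= t ->
  sigma `<=` C -> finite_set sigma -> sigma !=set0 ->
  tau `<=` ~` C -> finite_set tau -> tau !=set0 ->
  let A := sup [set beta x theta | x in sigma] in
  let B := sup [set rY y | y in tau] in
  VR_simplex setT d t (sigma `|` tau) <->
  [/\ VR_simplex C beta t sigma,
      VR_simplex (~` C) dreg t tau &
      lpnorm2 p A B <= t].
Proof.
move=> Ct p1 dsym b0 r0 dC dR dX t0 sC sfin sne tC tfin tne A B.
have [hA1 hA2] : [set beta x theta | x in sigma] A /\
   (forall y, [set beta x theta | x in sigma] y -> y <= A).
  apply: fin_sup; first exact: finite_image.
  by case: sne => x sx; exists (beta x theta); exists x.
have [hB1 hB2] : [set rY x | x in tau] B /\
   (forall y, [set rY x | x in tau] y -> y <= B).
  apply: fin_sup; first exact: finite_image.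
  by case: tne => x sx; exists (rY x); exists x.
split.
- case=> _ _ _ H; split.
  + split => // x y sx sy; rewrite -dC; [apply: H; by left|exact: sC|exact: sC].
  + split => // x y sx sy; rewrite -dR; [apply: H; by right|exact: tC|exact: tC].
  + case: hA1 => x0 sx0 <-; case: hB1 => y0 ty0 <-.
    rewrite -dX; [apply: H; [by left | by right] | exact: sC | exact: tC].
- case=> [[_ _ _ H1] [_ _ _ H2] H3]; split => //.
  + by rewrite finite_setU.
  + by case: sne => x sx; exists x; left.
  have cross : forall x y, sigma x -> tau y -> d x y <= t.
    move=> x y sx ty; rewrite dX; [|exact: sC|exact: tC].
    apply: le_trans H3; apply: lp_mono => //.
    + by apply: hA2; exists x.
    + by apply: hB2; exists y.
  move=> x y [sx|tx] [sy|ty].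
  + by rewrite dC; [apply: H1|exact: sC|exact: sC].
  + exact: cross.
  + by rewrite dsym; apply: cross.
  + by rewrite dR; [apply: H2|exact: tC|exact: tC].
Qed.
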